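(* Let $K\subset\mathbb E$ be a regular cone and $F$ a normal barrier for $K$. The following are equivalent: (1) $F$ has negative curvature; (2) for every $x\in\operatorname{int}K$ and $h\in\mathbb E$, $-\nabla^3F(x)[h,h]\in K^*$; (3) for every $x\in\operatorname{int}K$ and $h\in\mathbb E$ with $x+h\in\operatorname{int}K$, $\nabla^2F(x)h-(\nabla F(x+h)-\nabla F(x))\in K^*$.
   Context: $\mathbb E$ finite-dimensional real space, dual $\mathbb E^*$, pairing $\langle\cdot,\cdot\rangle$. $K$ regular: closed, convex, pointed, nonempty interior; $K^*=\{s\in\mathbb E^*:\langle s,x\rangle\ge0\ \forall x\in K\}$. A normal barrier for $K$ is a self-concordant barrier $F$ on $\operatorname{int}K$ which is logarithmically homogeneous: $F(\tau x)=F(x)-\nu\ln\tau$ for some $\nu$ and all $\tau>0$. $\nabla^3F(x)[h]$ denotes the self-adjoint operator $\mathbb E\to\mathbb E^*$ with $\langle\nabla^3F(x)[h]u,w\rangle=D^3F(x)[h,u,w]$, and $\nabla^3F(x)[h,h]\in\mathbb E^*$ is the vector $u\mapsto D^3F(x)[h,h,u]$. Definition: $F$ has negative curvature if $\nabla^3F(x)[h]\preceq0$ (i.e. $D^3F(x)[h,u,u]\le0$ for all $u\in\mathbb E$) for every $x\in\operatorname{int}K$ and every $h\in K$. *)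

(* Defs.v *)
(* classical reals.  E = R^n, realised as functions Fin.t n -> R;
   E^* is identified with R^n through the standard inner product [dot]. *)
From Stdlib Require Import Reals.
From Stdlib Require Vectors.Fin.
Open Scope R_scope.

Definition vec (n : nat) := Fin.t n -> R.

Definition vadd {n} (x y : vec n) : vec n := fun i => x i + y i.
Definition vopp {n} (x : vec n) : vec n := fun i => - x i.
Definition vscale {n} (t : R) (x : vec n) : vec n := fun i => t * x i.
Definition vsub {n} (x y : vec n) : vec n := vadd x (vopp y).

Fixpoint dot {n : nat} : vec n -> vec n -> R :=
  match n return vec n -> vec n -> R with
  | O => fun _ _ => 0
  | S m => fun x y => x Fin.F1 * y Fin.F1
             + dot (fun i => x (Fin.FS i)) (fun i => y (Fin.FS i))
  end.

Definition vnorm {n} (x : vec n) : R := sqrt (dot x x).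
Definition vdist {n} (x y : vec n) : R := vnorm (vsub x y).

Definition ebasis {n} (i : Fin.t n) : vec n :=
  fun j => if Fin.eq_dec i j then 1 else 0.

Definition int_set {n} (K : vec n -> Prop) (x : vec n) : Prop :=
  exists eps, 0 < eps /\ forall y, vdist y x < eps -> K y.
Definition closed_set {n} (K : vec n -> Prop) : Prop :=
  forall x, (forall eps, 0 < eps -> exists y, K y /\ vdist y x < eps) -> K x.
Definition seq_cv {n} (xs : nat -> vec n) (l : vec n) : Prop :=
  forall eps, 0 < eps -> exists N, forall k, (N <= k)%nat -> vdist (xs k) l < eps.

Definition convex_cone {n} (K : vec n -> Prop) : Prop :=
  (exists x, K x) /\
  (forall x t, K x -> 0 <= t -> K (vscale t x)) /\
  (forall x y, K x -> K y -> K (vadd x y)).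
Definition pointed {n} (K : vec n -> Prop) : Prop :=
  forall x, K x -> K (vopp x) -> x = (fun _ => 0).
Definition regular_cone {n} (K : vec n -> Prop) : Prop :=
  closed_set K /\ convex_cone K /\ pointed K /\ exists x, int_set K x.

Definition dual_cone {n} (K : vec n -> Prop) (s : vec n) : Prop :=
  forall x, K x -> 0 <= dot s x.

Definition gderiv {n} (U : vec n -> Prop) (f : vec n -> R) (Df : vec n -> vec n -> R)
  : Prop :=
  forall x, U x -> forall h,
    derivable_pt_lim (fun t => f (vadd x (vscale t h))) 0 (Df x h).

Definition cont_on {n} (U : vec n -> Prop) (g : vec n -> R) : Prop :=
  forall x, U x -> forall eps, 0 < eps ->
    exists delta, 0 < delta /\
      forall y, U y -> vdist y x < delta -> Rabs (g y - g x) < eps.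

(* F is C^3 on U with  D1 x h = DF(x)[h],  D2 x h u = D^2F(x)[h,u],
   D3 x h u w = D^3F(x)[h,u,w]  (the derivatives are continuous). *)
Definition C3_with {n} (U : vec n -> Prop) (F : vec n -> R)
  (D1 : vec n -> vec n -> R) (D2 : vec n -> vec n -> vec n -> R)
  (D3 : vec n -> vec n -> vec n -> vec n -> R) : Prop :=
  gderiv U F D1 /\
  (forall h, gderiv U (fun x => D1 x h) (fun x u => D2 x h u)) /\
  (forall h u, gderiv U (fun x => D2 x h u) (fun x w => D3 x h u w)) /\
  (forall h, cont_on U (fun x => D1 x h)) /\
  (forall h u, cont_on U (fun x => D2 x h u)) /\
  (forall h u w, cont_on U (fun x => D3 x h u w)).

Definition grad {n} (D1 : vec n -> vec n -> R) (x : vec n) : vec n :=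
  fun i => D1 x (ebasis i).
Definition hess_app {n} (D2 : vec n -> vec n -> vec n -> R) (x h : vec n) : vec n :=
  fun i => D2 x h (ebasis i).
Definition third_app {n} (D3 : vec n -> vec n -> vec n -> vec n -> R)
  (x h u : vec n) : vec n :=
  fun i => D3 x h u (ebasis i).

Definition self_concordant_barrier {n} (K : vec n -> Prop) (F : vec n -> R) (nu : R)
  (D1 : vec n -> vec n -> R) (D2 : vec n -> vec n -> vec n -> R)
  (D3 : vec n -> vec n -> vec n -> vec n -> R) : Prop :=
  let U := int_set K in
  C3_with U F D1 D2 D3 /\
  (forall x y t, U x -> U y -> 0 <= t <= 1 ->
     F (vadd (vscale t x) (vscale (1 - t) y)) <= t * F x + (1 - t) * F y) /\
  (forall (xs : nat -> vec n) xb, (forall k, U (xs k)) -> seq_cv xs xb -> ~ U xb ->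
     forall M, exists N, forall k, (N <= k)%nat -> M < F (xs k)) /\
  (forall x h, U x ->
     Rabs (D3 x h h h) <= 2 * (D2 x h h * sqrt (D2 x h h))) /\
  (forall x h, U x -> (D1 x h) ^ 2 <= nu * D2 x h h).

Definition normal_barrier {n} (K : vec n -> Prop) (F : vec n -> R) (nu : R)
  D1 D2 D3 : Prop :=
  self_concordant_barrier K F nu D1 D2 D3 /\
  (forall x tau, int_set K x -> 0 < tau -> F (vscale tau x) = F x - nu * ln tau).

Definition negative_curvature {n} (K : vec n -> Prop)
  (D3 : vec n -> vec n -> vec n -> vec n -> R) : Prop :=
  forall x h, int_set K x -> K h -> forall u, D3 x h u u <= 0.

(* Main.v *)
Require Import Defs.
From Stdlib Require Import Reals Lra FunctionalExtensionality.
From Stdlib Require Vectors.Fin.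
Open Scope R_scope.

Ltac vec_eq := apply functional_extensionality; intro; unfold vsub, vadd, vscale, vopp; ring.

Lemma dot_add_l n (a b c : vec n) : dot (vadd a b) c = dot a c + dot b c.
Proof.
  induction n; simpl; [ring|].
  specialize (IHn (fun i => a (Fin.FS i)) (fun i => b (Fin.FS i)) (fun i => c (Fin.FS i))).
  unfold vadd in *. rewrite IHn. ring.
Qed.

Lemma dot_scale_l n t (a c : vec n) : dot (vscale t a) c = t * dot a c.
Proof.
  induction n; simpl; [ring|].
  specialize (IHn (fun i => a (Fin.FS i)) (fun i => c (Fin.FS i))).
  unfold vscale in *. rewrite IHn. ring.
Qed.

Lemma dot_comm n (a c : vec n) : dot a c = dot c a.
Proof.
  induction n; simpl; [ring|].
  rewrite IHn. ring.
Qed.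

Lemma dot_nonneg n (a : vec n) : 0 <= dot a a.
Proof.
  induction n; simpl; [lra|].
  specialize (IHn (fun i => a (Fin.FS i))). nra.
Qed.

Lemma dot_opp_l n (a c : vec n) : dot (vopp a) c = - dot a c.
Proof.
  replace (vopp a) with (vscale (-1) a) by vec_eq. rewrite dot_scale_l. ring.
Qed.

Lemma dot_sub_l n (a b c : vec n) : dot (vsub a b) c = dot a c - dot b c.
Proof. unfold vsub. rewrite dot_add_l, dot_opp_l. ring. Qed.

Lemma CS n (a b : vec n) : (dot a b)^2 <= dot a a * dot b b.
Proof.
  assert (H : forall t, 0 <= dot a a + 2 * t * dot a b + t^2 * dot b b).
  { intro t. pose proof (dot_nonneg n (vadd a (vscale t b))) as H.
    rewrite !dot_add_l, !dot_scale_l in H.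
    rewrite (dot_comm n a (vadd a (vscale t b))), (dot_comm n b (vadd a (vscale t b))) in H.
    rewrite !dot_add_l, !dot_scale_l in H. rewrite (dot_comm n b a) in H. nra. }
  pose proof (dot_nonneg n a). pose proof (dot_nonneg n b).
  destruct (Req_dec (dot b b) 0) as [E|E].
  - destruct (Req_dec (dot a b) 0) as [E2|E2].
    + rewrite E2, E. nra.
    + exfalso. specialize (H (-(dot a a + 1)/(2*dot a b))). rewrite E in H.
      replace (dot a a + 2 * (- (dot a a + 1) / (2 * dot a b)) * dot a b +
        (- (dot a a + 1) / (2 * dot a b)) ^ 2 * 0) with (-1) in H by (field; auto). lra.
  - specialize (H (- dot a b / dot b b)).
    assert (0 < dot b b) by lra.
    replace (dot a a + 2 * (- dot a b / dot b b) * dot a b + (- dot a b / dot b b) ^ 2 * dot b b)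
      with ((dot a a * dot b b - (dot a b)^2) / dot b b) in H by (field; lra).
    apply Rmult_le_compat_r with (r := dot b b) in H; [|lra].
    unfold Rdiv in H. rewrite Rmult_assoc, Rinv_l in H; lra.
Qed.

Lemma vnorm_nonneg n (a : vec n) : 0 <= vnorm a.
Proof. apply sqrt_pos. Qed.

Lemma vnorm_sq n (a : vec n) : vnorm a * vnorm a = dot a a.
Proof. apply sqrt_sqrt, dot_nonneg. Qed.

Lemma vnorm_tri n (a b : vec n) : vnorm (vadd a b) <= vnorm a + vnorm b.
Proof.
  pose proof (vnorm_nonneg n a). pose proof (vnorm_nonneg n b).
  unfold vnorm at 1. rewrite <- (sqrt_square (vnorm a + vnorm b)) by lra.
  apply sqrt_le_1_alt.
  rewrite !dot_add_l. rewrite (dot_comm n a (vadd a b)), (dot_comm n b (vadd a b)), !dot_add_l.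
  pose proof (vnorm_sq n a). pose proof (vnorm_sq n b). pose proof (CS n a b).
  rewrite (dot_comm n b a).
  assert (dot a b <= vnorm a * vnorm b).
  { rewrite <- H1, <- H2 in H3. assert (0 <= vnorm a * vnorm b) by nra.
    destruct (Rle_or_lt (dot a b) (vnorm a * vnorm b)); auto. exfalso.
    assert ((vnorm a * vnorm b) * (vnorm a * vnorm b) < dot a b * dot a b) by nra. nra. }
  nra.
Qed.

Lemma vnorm_scale n t (a : vec n) : vnorm (vscale t a) = Rabs t * vnorm a.
Proof.
  unfold vnorm. rewrite dot_scale_l, (dot_comm n a (vscale t a)), dot_scale_l.
  rewrite <- Rmult_assoc, sqrt_mult.
  - fold (Rsqr t). rewrite sqrt_Rsqr_abs. reflexivity.
  - nra.
  - apply dot_nonneg.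
Qed.

Lemma vdist_tri n (x y z : vec n) : vdist x z <= vdist x y + vdist y z.
Proof.
  unfold vdist. replace (vsub x z) with (vadd (vsub x y) (vsub y z)) by vec_eq.
  apply vnorm_tri.
Qed.

Lemma open_int n (K : vec n -> Prop) x : int_set K x ->
  exists r, 0 < r /\ forall y, vdist y x < r -> int_set K y.
Proof.
  intros [e [He H]]. exists (e/2). split; [lra|].
  intros y Hy. exists (e/2). split; [lra|]. intros z Hz. apply H.
  pose proof (vdist_tri n z y x). lra.
Qed.

Lemma near1 n (K : vec n -> Prop) x h rho : int_set K x -> 0 < rho ->
  exists r, 0 < r /\ forall t, Rabs t < r ->
    int_set K (vadd x (vscale t h)) /\ vdist (vadd x (vscale t h)) x < rho.
Proof.
  intros Hx Hrho. destruct (open_int n K x Hx) as [e [He Ho]].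
  set (m := Rmin e rho).
  assert (0 < m) by (unfold m; apply Rmin_pos; lra).
  pose proof (vnorm_nonneg n h).
  exists (m / (vnorm h + 1)). split; [apply Rdiv_lt_0_compat; lra|].
  intros t Ht.
  assert (D : vdist (vadd x (vscale t h)) x < m).
  { unfold vdist. replace (vsub (vadd x (vscale t h)) x) with (vscale t h) by vec_eq.
    rewrite vnorm_scale.
    apply Rmult_lt_compat_r with (r := vnorm h + 1) in Ht; [|lra].
    unfold Rdiv in Ht. rewrite Rmult_assoc, Rinv_l in Ht by lra.
    pose proof (Rabs_pos t). nra. }
  pose proof (Rmin_l e rho). pose proof (Rmin_r e rho). fold m in H1, H2.
  split; [apply Ho|]; lra.
Qed.

Lemma near2 n (K : vec n -> Prop) x a b rho : int_set K x -> 0 < rho ->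
  exists r, 0 < r /\ forall s t, Rabs s < r -> Rabs t < r ->
    int_set K (vadd (vadd x (vscale s a)) (vscale t b)) /\
    vdist (vadd (vadd x (vscale s a)) (vscale t b)) x < rho.
Proof.
  intros Hx Hrho. destruct (open_int n K x Hx) as [e [He Ho]].
  set (m := Rmin e rho).
  assert (0 < m) by (unfold m; apply Rmin_pos; lra).
  pose proof (vnorm_nonneg n a). pose proof (vnorm_nonneg n b).
  exists (m / (vnorm a + vnorm b + 1)). split; [apply Rdiv_lt_0_compat; lra|].
  intros s t Hs Ht.
  assert (D : vdist (vadd (vadd x (vscale s a)) (vscale t b)) x < m).
  { unfold vdist. replace (vsub (vadd (vadd x (vscale s a)) (vscale t b)) x)
      with (vadd (vscale s a) (vscale t b)) by vec_eq.
    eapply Rle_lt_trans; [apply vnorm_tri|].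
    rewrite !vnorm_scale.
    assert (Rabs s * (vnorm a + vnorm b + 1) < m /\ Rabs t * (vnorm a + vnorm b + 1) < m) as [A1 A2].
    { split; [apply Rmult_lt_compat_r with (r := vnorm a + vnorm b + 1) in Hs
             | apply Rmult_lt_compat_r with (r := vnorm a + vnorm b + 1) in Ht]; try lra;
      unfold Rdiv in *; rewrite Rmult_assoc, Rinv_l in * by lra; lra. }
    pose proof (Rabs_pos t). pose proof (Rabs_pos s). nra. }
  pose proof (Rmin_l e rho). pose proof (Rmin_r e rho). fold m in H2, H3.
  split; [apply Ho|]; lra.
Qed.

Lemma shift_deriv g l t0 : derivable_pt_lim g 0 l ->
  derivable_pt_lim (fun t => g (t - t0)) t0 l.
Proof.
  intros H eps He. destruct (H eps He) as [d Hd]. exists d. intros h Hh Hhd.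
  replace (t0 + h - t0) with (0 + h) by ring. replace (t0 - t0) with 0 by ring.
  apply Hd; auto.
Qed.

Lemma line_deriv n (U : vec n -> Prop) f Df base k t0 : gderiv U f Df ->
  U (vadd base (vscale t0 k)) ->
  derivable_pt_lim (fun t => f (vadd base (vscale t k))) t0 (Df (vadd base (vscale t0 k)) k).
Proof.
  intros H HU. specialize (H _ HU k).
  apply shift_deriv with (t0 := t0) in H.
  eapply derivable_pt_lim_ext; [|exact H].
  intro t. simpl. f_equal. vec_eq.
Qed.

Lemma local_deriv f g l : derivable_pt_lim f 0 l ->
  (exists r, 0 < r /\ forall t, Rabs t < r -> f t = g t) -> derivable_pt_lim g 0 l.
Proof.
  intros H [r [Hr Hfg]] eps He. destruct (H eps He) as [d Hd].
  assert (0 < Rmin d r) by (apply Rmin_pos; [apply cond_pos|lra]).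
  exists (mkposreal _ H0). intros h Hh Hhd. simpl in Hhd.
  pose proof (Rmin_l d r). pose proof (Rmin_r d r).
  rewrite <- !Hfg; [apply Hd; auto; lra| |]; rewrite ?Rplus_0_l, ?Rabs_R0; lra.
Qed.

Lemma mvt_gen g g' t : (forall c, Rabs c <= Rabs t -> derivable_pt_lim g c (g' c)) ->
  exists c, Rabs c <= Rabs t /\ g t - g 0 = g' c * t.
Proof.
  intros H. destruct (Rtotal_order t 0) as [Hl|[He|Hg]].
  - destruct (MVT_cor2 g g' t 0 Hl) as [c [E Hc]].
    { intros c Hc. apply H. rewrite !Rabs_left1; lra. }
    exists c. split; [rewrite !Rabs_left1; lra|]. lra.
  - subst. exists 0. split; [lra|]. ring.
  - destruct (MVT_cor2 g g' 0 t Hg) as [c [E Hc]].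
    { intros c Hc. apply H. rewrite !Rabs_right; lra. }
    exists c. split; [rewrite !Rabs_right; lra|]. lra.
Qed.

Lemma deriv_homog n (U : vec n -> Prop) f Df x c h : gderiv U f Df -> U x ->
  Df x (vscale c h) = c * Df x h.
Proof.
  intros H Hx. apply (uniqueness_limite (fun t => f (vadd x (vscale t (vscale c h)))) 0).
  - apply H; auto.
  - pose proof (H x Hx h) as Hh.
    assert (Hl : derivable_pt_lim (fun t => c * t) 0 c).
    { intros e He. exists (mkposreal 1 Rlt_0_1). intros u Hu _.
      replace ((c * (0 + u) - c * 0) / u - c) with 0 by (field; auto).
      rewrite Rabs_R0. lra. }
    pose proof (derivable_pt_lim_comp (fun t => c * t) (fun t => f (vadd x (vscale t h))) 0 _ (Df x h) Hl) as Hc.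
    simpl in Hc. rewrite Rmult_0_r in Hc. specialize (Hc Hh).
    rewrite Rmult_comm. eapply derivable_pt_lim_ext; [|exact Hc].
    intro t. unfold comp. f_equal. vec_eq.
Qed.

Lemma deriv_add n (K : vec n -> Prop) f Df x h k : gderiv (int_set K) f Df ->
  (forall k, cont_on (int_set K) (fun z => Df z k)) -> int_set K x ->
  Df x (vadd h k) = Df x h + Df x k.
Proof.
  intros H Hc Hx. apply (uniqueness_limite (fun t => f (vadd x (vscale t (vadd h k)))) 0).
  { apply H; auto. }
  intros eps He.
  destruct (H x Hx h (eps/2)) as [d1 Hd1]; [lra|].
  destruct (Hc k x Hx (eps/2)) as [rho [Hrho Hcont]]; [lra|].
  destruct (near2 n K x h k rho Hx Hrho) as [r [Hr Hn]].
  assert (0 < Rmin d1 r) by (apply Rmin_pos; [apply cond_pos|lra]).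
  exists (mkposreal _ H0). intros t Ht Htd. simpl in Htd.
  pose proof (Rmin_l d1 r). pose proof (Rmin_r d1 r).
  set (g := fun s => f (vadd (vadd x (vscale t h)) (vscale s k))).
  destruct (mvt_gen g (fun s => Df (vadd (vadd x (vscale t h)) (vscale s k)) k) t) as [c [Hc1 Hc2]].
  { intros c Hc1. unfold g. apply line_deriv with (U := int_set K); auto.
    apply Hn; lra. }
  unfold g in Hc2.
  replace (f (vadd x (vscale (0 + t) (vadd h k)))) with
     (f (vadd (vadd x (vscale t h)) (vscale t k))) by (f_equal; rewrite Rplus_0_l; vec_eq).
  replace (f (vadd x (vscale 0 (vadd h k)))) with (f x) by (f_equal; vec_eq).
  replace (f (vadd (vadd x (vscale t h)) (vscale 0 k))) with (f (vadd x (vscale t h))) in Hc2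
    by (f_equal; vec_eq).
  specialize (Hd1 t Ht). specialize (Hd1 ltac:(lra)).
  replace (f (vadd x (vscale (0 + t) h))) with (f (vadd x (vscale t h))) in Hd1 by (rewrite Rplus_0_l; auto).
  replace (f (vadd x (vscale 0 h))) with (f x) in Hd1 by (f_equal; vec_eq).
  assert (Hcc : Rabs (Df (vadd (vadd x (vscale t h)) (vscale c k)) k - Df x k) < eps/2).
  { apply Hcont; apply Hn; lra. }
  replace ((f (vadd (vadd x (vscale t h)) (vscale t k)) - f x) / t - (Df x h + Df x k))
    with (((f (vadd x (vscale t h)) - f x) / t - Df x h) +
          (Df (vadd (vadd x (vscale t h)) (vscale c k)) k - Df x k)).
  - eapply Rle_lt_trans; [apply Rabs_triang|]. lra.
  - replace (f (vadd (vadd x (vscale t h)) (vscale t k))) with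
      (f (vadd x (vscale t h)) + Df (vadd (vadd x (vscale t h)) (vscale c k)) k * t) by lra.
    field. auto.
Qed.

Definition lin_map {n} (L : vec n -> R) :=
  (forall a b, L (vadd a b) = L a + L b) /\ (forall c a, L (vscale c a) = c * L a).

Definition ext0 {m} (z : vec m) : vec (S m) :=
  fun j => Fin.caseS' j (fun _ => R) 0 z.

Lemma ebasis_FS m (i : Fin.t m) : ebasis (Fin.FS i) = ext0 (ebasis i).
Proof.
  apply functional_extensionality. intro j. unfold ext0, ebasis.
  apply (Fin.caseS' j); simpl.
  - destruct (Fin.eq_dec (Fin.FS i) Fin.F1) as [E|E]; [inversion E|reflexivity].
  - intro p. destruct (Fin.eq_dec (Fin.FS i) (Fin.FS p)) as [E|E];
    destruct (Fin.eq_dec i p) as [E2|E2]; auto.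
    + apply Fin.FS_inj in E. contradiction.
    + subst. contradiction.
Qed.

Lemma decomp m (y : vec (S m)) :
  y = vadd (vscale (y Fin.F1) (ebasis Fin.F1)) (ext0 (fun i => y (Fin.FS i))).
Proof.
  apply functional_extensionality. intro j. unfold vadd, vscale, ext0, ebasis.
  apply (Fin.caseS' j); simpl.
  - destruct (Fin.eq_dec Fin.F1 Fin.F1); [ring|contradiction].
  - intro p. destruct (Fin.eq_dec Fin.F1 (Fin.FS p)) as [E|E]; [inversion E|ring].
Qed.

Lemma ext0_add m (a b : vec m) : ext0 (vadd a b) = vadd (ext0 a) (ext0 b).
Proof.
  apply functional_extensionality. intro j. unfold vadd, ext0.
  apply (Fin.caseS' j); simpl; [ring|reflexivity].
Qed.

Lemma ext0_scale m c (a : vec m) : ext0 (vscale c a) = vscale c (ext0 a).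
Proof.
  apply functional_extensionality. intro j. unfold vscale, ext0.
  apply (Fin.caseS' j); simpl; [ring|reflexivity].
Qed.

Lemma dot_basis n (L : vec n -> R) y : lin_map L -> dot (fun i => L (ebasis i)) y = L y.
Proof.
  revert L y. induction n; intros L y [La Ls].
  - simpl. replace y with (vscale 0 y).
    + rewrite Ls. ring.
    + apply functional_extensionality. intro j. inversion j.
  - simpl.
    replace (fun i : Fin.t n => L (ebasis (Fin.FS i))) with (fun i => (fun z => L (ext0 z)) (ebasis i))
      by (apply functional_extensionality; intro i; rewrite ebasis_FS; reflexivity).
    rewrite (IHn (fun z => L (ext0 z))).
    + pose proof (f_equal L (decomp n y)) as E. rewrite E. rewrite La, Ls. ring.
    + split; intros; rewrite ?ext0_add, ?ext0_scale; auto.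
Qed.

Lemma lin_deriv n (K : vec n -> Prop) f Df x : gderiv (int_set K) f Df ->
  (forall k, cont_on (int_set K) (fun z => Df z k)) -> int_set K x -> lin_map (Df x).
Proof.
  intros H Hc Hx. split; intros.
  - eapply deriv_add; eauto.
  - eapply deriv_homog; eauto.
Qed.

Definition Q {n} (x a b : vec n) s t := vadd (vadd x (vscale s a)) (vscale t b).

Lemma Qsw n (x a b : vec n) s t : Q x a b s t = vadd (vadd x (vscale t b)) (vscale s a).
Proof. unfold Q. vec_eq. Qed.

Lemma dQa n (U : vec n -> Prop) g Dg x a b t s0 : gderiv U g Dg -> U (Q x a b s0 t) ->
  derivable_pt_lim (fun s => g (Q x a b s t)) s0 (Dg (Q x a b s0 t) a).
Proof.
  intros H HU. rewrite Qsw in HU |- *.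
  eapply derivable_pt_lim_ext; [|apply (line_deriv n U g Dg); eauto].
  intro s. simpl. rewrite Qsw. reflexivity.
Qed.

Lemma dQb n (U : vec n -> Prop) g Dg x a b s t0 : gderiv U g Dg -> U (Q x a b s t0) ->
  derivable_pt_lim (fun t => g (Q x a b s t)) t0 (Dg (Q x a b s t0) b).
Proof.
  intros H HU. unfold Q in *. apply (line_deriv n U g Dg); eauto.
Qed.

Lemma dminus f1 f2 x l1 l2 : derivable_pt_lim f1 x l1 -> derivable_pt_lim f2 x l2 ->
  derivable_pt_lim (fun t => f1 t - f2 t) x (l1 - l2).
Proof. intros. apply (derivable_pt_lim_minus f1 f2); auto. Qed.

Lemma schwarz n (K : vec n -> Prop) f Df D2f x a b :
  gderiv (int_set K) f Df ->
  (forall a, gderiv (int_set K) (fun z => Df z a) (fun z b => D2f z a b)) ->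
  (forall a b, cont_on (int_set K) (fun z => D2f z a b)) -> int_set K x ->
  D2f x a b = D2f x b a.
Proof.
  intros H1 H2 Hc Hx.
  destruct (Req_dec (D2f x a b) (D2f x b a)) as [E|E]; auto. exfalso.
  set (eps := Rabs (D2f x a b - D2f x b a) / 4).
  assert (Heps : 0 < eps).
  { unfold eps. apply Rdiv_lt_0_compat; [apply Rabs_pos_lt; lra|lra]. }
  destruct (Hc a b x Hx eps Heps) as [r1 [Hr1 C1]].
  destruct (Hc b a x Hx eps Heps) as [r2 [Hr2 C2]].
  destruct (near2 n K x a b (Rmin r1 r2) Hx) as [r [Hr HN]]; [apply Rmin_pos; lra|].
  pose proof (Rmin_l r1 r2). pose proof (Rmin_r r1 r2).
  assert (HQ : forall s t, Rabs s < r -> Rabs t < r ->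
    int_set K (Q x a b s t) /\ vdist (Q x a b s t) x < Rmin r1 r2) by (intros; apply HN; auto).
  set (s := r / 2). assert (Hs : 0 < s) by (unfold s; lra).
  assert (IN : forall u v, 0 <= u <= s -> 0 <= v <= s -> int_set K (Q x a b u v) /\ vdist (Q x a b u v) x < Rmin r1 r2).
  { intros u v Hu Hv. apply HQ; rewrite Rabs_right; unfold s in *; lra. }
  destruct (MVT_cor2 (fun u => f (Q x a b u s) - f (Q x a b u 0))
                     (fun u => Df (Q x a b u s) a - Df (Q x a b u 0) a) 0 s Hs) as [s1 [M1 Hs1]].
  { intros c Hc0. apply dminus; apply (dQa n (int_set K)); auto; apply IN; lra. }
  destruct (MVT_cor2 (fun v => Df (Q x a b s1 v) a)
                     (fun v => D2f (Q x a b s1 v) a b) 0 s Hs) as [t1 [M2 Ht1]].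
  { intros c Hc0. apply (dQb n (int_set K) (fun z => Df z a) (fun z b => D2f z a b)); auto; apply IN; lra. }
  destruct (MVT_cor2 (fun v => f (Q x a b s v) - f (Q x a b 0 v))
                     (fun v => Df (Q x a b s v) b - Df (Q x a b 0 v) b) 0 s Hs) as [t2 [M3 Ht2]].
  { intros c Hc0. apply dminus; apply (dQb n (int_set K)); auto; apply IN; lra. }
  destruct (MVT_cor2 (fun u => Df (Q x a b u t2) b)
                     (fun u => D2f (Q x a b u t2) b a) 0 s Hs) as [s2 [M4 Hs2]].
  { intros c Hc0. apply (dQa n (int_set K) (fun z => Df z b) (fun z a => D2f z b a)); auto; apply IN; lra. }
  simpl in *.
  assert (EQ : D2f (Q x a b s1 t1) a b = D2f (Q x a b s2 t2) b a).
  { assert (D2f (Q x a b s1 t1) a b * (s * s) = D2f (Q x a b s2 t2) b a * (s * s)) by nra.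
    apply Rmult_eq_reg_r in H3; auto. nra. }
  assert (A1 : Rabs (D2f (Q x a b s1 t1) a b - D2f x a b) < eps).
  { destruct (IN s1 t1) as [I1 I2]; try lra. apply C1; auto; lra. }
  assert (A2 : Rabs (D2f (Q x a b s2 t2) b a - D2f x b a) < eps).
  { destruct (IN s2 t2) as [I1 I2]; try lra. apply C2; auto; lra. }
  rewrite EQ in A1. unfold eps in *.
  assert (Rabs (D2f x a b - D2f x b a) <= Rabs (D2f (Q x a b s2 t2) b a - D2f x a b) + Rabs (D2f (Q x a b s2 t2) b a - D2f x b a)).
  { replace (D2f x a b - D2f x b a) with (-(D2f (Q x a b s2 t2) b a - D2f x a b) + (D2f (Q x a b s2 t2) b a - D2f x b a)) by ring.
    eapply Rle_trans; [apply Rabs_triang|]. rewrite Rabs_Ropp. lra. }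
  lra.
Qed.

Lemma int_convex n (K : vec n -> Prop) x h t : regular_cone K ->
  int_set K x -> int_set K (vadd x h) -> 0 <= t <= 1 -> int_set K (vadd x (vscale t h)).
Proof.
  intros [_ [[_ [Hs Ha]] _]] [e1 [He1 B1]] [e2 [He2 B2]] Ht.
  exists (Rmin e1 e2). split; [apply Rmin_pos; lra|].
  intros y Hy. pose proof (Rmin_l e1 e2). pose proof (Rmin_r e1 e2).
  assert (K1 : K (vadd x (vsub y (vadd x (vscale t h))))).
  { apply B1. unfold vdist. replace (vsub (vadd x (vsub y (vadd x (vscale t h)))) x)
      with (vsub y (vadd x (vscale t h))) by vec_eq. unfold vdist in Hy. lra. }
  assert (K2 : K (vadd (vadd x h) (vsub y (vadd x (vscale t h))))).
  { apply B2. unfold vdist. replace (vsub (vadd (vadd x h) (vsub y (vadd x (vscale t h)))) (vadd x h))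
      with (vsub y (vadd x (vscale t h))) by vec_eq. unfold vdist in Hy. lra. }
  replace y with (vadd (vscale (1 - t) (vadd x (vsub y (vadd x (vscale t h)))))
                       (vscale t (vadd (vadd x h) (vsub y (vadd x (vscale t h)))))) by vec_eq.
  apply Ha; apply Hs; auto; lra.
Qed.

Section Sec.
Context (n : nat) (K : vec n -> Prop) (F : vec n -> R)
  (D1 : vec n -> vec n -> R) (D2 : vec n -> vec n -> vec n -> R)
  (D3 : vec n -> vec n -> vec n -> vec n -> R)
  (HC : C3_with (int_set K) F D1 D2 D3).

Lemma sym2 x a b : int_set K x -> D2 x a b = D2 x b a.
Proof.
  destruct HC as [H1 [H2 [H3 [C1 [C2 C3]]]]]. intro Hx.
  apply (schwarz n K F D1 D2); auto.
Qed.

Lemma sym23 x a b c : int_set K x -> D3 x a b c = D3 x a c b.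
Proof.
  destruct HC as [H1 [H2 [H3 [C1 [C2 C3]]]]]. intro Hx.
  apply (schwarz n K (fun z => D1 z a) (fun z b => D2 z a b) (fun z b c => D3 z a b c)); auto.
Qed.

Lemma sym12 x a b c : int_set K x -> D3 x a b c = D3 x b a c.
Proof.
  destruct HC as [H1 [H2 [H3 [C1 [C2 C3]]]]]. intro Hx.
  apply (uniqueness_limite (fun t => D2 (vadd x (vscale t c)) a b) 0).
  - apply H3; auto.
  - apply local_deriv with (f := fun t => D2 (vadd x (vscale t c)) b a).
    + apply H3; auto.
    + destruct (near1 n K x c 1 Hx Rlt_0_1) as [r [Hr Hn]]. exists r. split; auto.
      intros t Ht. apply sym2. apply Hn; auto.
Qed.

Lemma sym_main x h y : int_set K x -> D3 x h h y = D3 x y h h.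
Proof. intro Hx. rewrite sym23 by auto. apply sym12; auto. Qed.

Lemma dot_third x h y : int_set K x -> dot (vopp (third_app D3 x h h)) y = - D3 x h h y.
Proof.
  destruct HC as [H1 [H2 [H3 [C1 [C2 C3]]]]]. intro Hx.
  rewrite dot_opp_l. unfold third_app. rewrite (dot_basis n (D3 x h h)); auto.
  apply (lin_deriv n K (fun z => D2 z h h) (fun z w => D3 z h h w)); auto.
Qed.

Lemma dot_hess x h y : int_set K x -> dot (hess_app D2 x h) y = D2 x h y.
Proof.
  destruct HC as [H1 [H2 [H3 [C1 [C2 C3]]]]]. intro Hx.
  unfold hess_app. rewrite (dot_basis n (D2 x h)); auto.
  apply (lin_deriv n K (fun z => D1 z h) (fun z w => D2 z h w)); auto.
Qed.

Lemma dot_grad x y : int_set K x -> dot (grad D1 x) y = D1 x y.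
Proof.
  destruct HC as [H1 [H2 [H3 [C1 [C2 C3]]]]]. intro Hx.
  unfold grad. rewrite (dot_basis n (D1 x)); auto.
  apply (lin_deriv n K F D1); auto.
Qed.

End Sec.

Theorem mainTheorem15 (n : nat) (K : vec n -> Prop) (F : vec n -> R) (nu : R)
  (D1 : vec n -> vec n -> R) (D2 : vec n -> vec n -> vec n -> R)
  (D3 : vec n -> vec n -> vec n -> vec n -> R) :
  regular_cone K ->
  normal_barrier K F nu D1 D2 D3 ->
  (negative_curvature K D3 <->
     (forall x h, int_set K x ->
        dual_cone K (vopp (third_app D3 x h h)))) /\
  ((forall x h, int_set K x ->
        dual_cone K (vopp (third_app D3 x h h))) <->
     (forall x h, int_set K x -> int_set K (vadd x h) ->
        dual_cone K (vsub (hess_app D2 x h)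
                          (vsub (grad D1 (vadd x h)) (grad D1 x))))).
Proof.
  intros Hreg [[HC _] _].
  pose proof HC as [H1 [H2 [H3 [C1 [C2 C3]]]]].
  split; split.
  - intros NC x h Hx y Hy. rewrite (dot_third n K F D1 D2 D3 HC) by auto.
    rewrite (sym_main n K F D1 D2 D3 HC) by auto.
    specialize (NC x y Hx Hy h). lra.
  - intros P2 x h Hx Hh u. specialize (P2 x u Hx h Hh).
    rewrite (dot_third n K F D1 D2 D3 HC) in P2 by auto.
    rewrite (sym_main n K F D1 D2 D3 HC) in P2 by auto. lra.
  - intros P2 x h Hx Hxh y Hy.
    rewrite !dot_sub_l, (dot_hess n K F D1 D2 D3 HC), !(dot_grad n K F D1 D2 D3 HC) by auto.
    assert (Seg : forall t, 0 <= t <= 1 -> int_set K (vadd x (vscale t h)))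
      by (intros; apply int_convex; auto).
    destruct (MVT_cor2 (fun t => D1 (vadd x (vscale t h)) y)
                       (fun t => D2 (vadd x (vscale t h)) y h) 0 1 Rlt_0_1) as [c [M1 Hc]].
    { intros c Hc. apply (line_deriv n (int_set K) (fun z => D1 z y) (fun z u => D2 z y u)); auto. }
    destruct (MVT_cor2 (fun t => D2 (vadd x (vscale t h)) y h)
                       (fun t => D3 (vadd x (vscale t h)) y h h) 0 c ltac:(lra)) as [d [M2 Hd]].
    { intros e He. apply (line_deriv n (int_set K) (fun z => D2 z y h) (fun z u => D3 z y h u)); auto.
      apply Seg; lra. }
    simpl in *.
    replace (vadd x (vscale 1 h)) with (vadd x h) in M1 by vec_eq.
    replace (vadd x (vscale 0 h)) with x in M1, M2 by vec_eq.
    rewrite (sym2 n K F D1 D2 D3 HC x h y Hx).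
    assert (Neg : D3 (vadd x (vscale d h)) y h h <= 0).
    { assert (Hd' : int_set K (vadd x (vscale d h))) by (apply Seg; lra).
      specialize (P2 _ h Hd' y Hy).
      rewrite (dot_third n K F D1 D2 D3 HC) in P2 by auto.
      rewrite (sym_main n K F D1 D2 D3 HC) in P2 by auto. lra. }
    nra.
  - intros P3 x h Hx y Hy.
    rewrite (dot_third n K F D1 D2 D3 HC) by auto.
    rewrite (sym_main n K F D1 D2 D3 HC) by auto.
    destruct (Rle_or_lt (D3 x y h h) 0) as [Hle|Hgt]; [lra|exfalso].
    destruct (C3 y h h x Hx (D3 x y h h / 2)) as [rho [Hrho Cc]]; [lra|].
    destruct (near1 n K x h rho Hx Hrho) as [r [Hr Hn]].
    set (s := r / 2). assert (Hs : 0 < s) by (unfold s; lra).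
    assert (IN : forall t, 0 <= t <= s -> int_set K (vadd x (vscale t h)) /\
                  vdist (vadd x (vscale t h)) x < rho).
    { intros t Ht. apply Hn. rewrite Rabs_right; unfold s in *; lra. }
    assert (Hxs : int_set K (vadd x (vscale s h))) by (apply IN; lra).
    specialize (P3 x (vscale s h) Hx Hxs y Hy).
    rewrite !dot_sub_l, (dot_hess n K F D1 D2 D3 HC), !(dot_grad n K F D1 D2 D3 HC) in P3 by auto.
    rewrite (sym2 n K F D1 D2 D3 HC x (vscale s h) y Hx) in P3.
    rewrite (deriv_homog n (int_set K) (fun z => D1 z y) (fun z u => D2 z y u)) in P3 by auto.
    destruct (MVT_cor2 (fun t => D1 (vadd x (vscale t h)) y)
                       (fun t => D2 (vadd x (vscale t h)) y h) 0 s Hs) as [c [M1 Hc]].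
    { intros c Hc. apply (line_deriv n (int_set K) (fun z => D1 z y) (fun z u => D2 z y u)); auto.
      apply IN; lra. }
    destruct (MVT_cor2 (fun t => D2 (vadd x (vscale t h)) y h)
                       (fun t => D3 (vadd x (vscale t h)) y h h) 0 c ltac:(lra)) as [d [M2 Hd]].
    { intros e He. apply (line_deriv n (int_set K) (fun z => D2 z y h) (fun z u => D3 z y h u)); auto.
      apply IN; lra. }
    simpl in *.
    replace (vadd x (vscale 0 h)) with x in M1, M2 by vec_eq.
    assert (Pos : 0 < D3 (vadd x (vscale d h)) y h h).
    { destruct (IN d) as [I1 I2]; [lra|].
      specialize (Cc _ I1 I2). apply Rabs_def2 in Cc. lra. }
    assert (0 < s * (c * D3 (vadd x (vscale d h)) y h h)).
    { apply Rmult_lt_0_compat; [lra|]. apply Rmult_lt_0_compat; lra. }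
    nra.
Qed.
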